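(* Let $k$ be an algebraically closed field of characteristic $0$, $n\ge1$, $d\ge2$, let $f\in\mathrm{End}^1_d$ and $F=s_n(f)$ its $n$-th symmetric power. For $P\in\mathbb{P}^1$ let $H_P=\{\Phi\in\mathcal{F}^1_n:\Phi(P)=0\}$. Then the hyperplane $H_P$ is improper under $F$ if and only if $P$ is preperiodic under $f$.
   Context: $\mathcal{F}^1_n\cong\mathbb{P}^n$ is the projective space of binary forms of degree $n$; the Vieta map $\eta:(\mathbb{P}^1)^n\to\mathcal{F}^1_n$ sends $((a_1:b_1),\dots,(a_n:b_n))$ to $\prod_i (b_i x - a_i y)$. The $n$-th symmetric power of $f$ is the unique degree-$d$ endomorphism $F$ of $\mathcal{F}^1_n$ with $F(\eta(P_1,\dots,P_n))=\eta(f(P_1),\dots,f(P_n))$ for all $P_i\in\mathbb{P}^1$. A hypersurface $H\subset\mathbb{P}^n$ is improper under $F$ if for every irreducible component $Z$ of $H$ there exist integers $0\le i_0<\dots<i_n$ with $F^{i_0}(Z)\cap\dots\cap F^{i_n}(Z)\neq\varnothing$. $P$ is preperiodic under $f$ if $f^s(P)=f^t(P)$ for some distinct $s,t\ge0$. *)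

(* Defs.v *)
From HB Require Import structures.
From mathcomp Require Import all_boot all_order all_algebra.
From mathcomp Require Import mpoly.
Set Implicit Arguments. Unset Strict Implicit. Unset Printing Implicit Defensive.
Import Order.TTheory GRing.Theory.
Local Open Scope ring_scope.

(* Points of P^(m-1) are represented by nonzero vectors
   v : 'I_m -> k, considered up to a nonzero scalar. *)
Section Defs.
Variable k : closedFieldType.

Definition nzv (m : nat) (v : 'I_m -> k) : Prop := exists i, v i != 0.

Definition peq (m : nat) (v w : 'I_m -> k) : Prop :=
  exists2 c : k, c != 0 & forall i, v i = c * w i.

Definition is_endo (m d : nat) (F : 'I_m -> {mpoly k[m]}) : Prop :=
  (forall j, F j \is d.-homog) /\
  (forall v : 'I_m -> k, (forall j, (F j).@[v] = 0) -> forall i, v i = 0).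

Definition evF (m : nat) (F : 'I_m -> {mpoly k[m]}) (v : 'I_m -> k) : 'I_m -> k :=
  fun j => (F j).@[v].

Definition iterF (m : nat) (F : 'I_m -> {mpoly k[m]}) (i : nat) (v : 'I_m -> k) :=
  iter i (evF F) v.

(* A binary form of degree n, Phi = sum_j c_j x^j y^(n-j), is identified with
   its coefficient vector c : 'I_n.+1 -> k (this identifies F^1_n with P^n).
   The Vieta map: ((a_i:b_i))_i |-> prod_i (b_i x - a_i y).  Its coefficients
   are those of the dehomogenised polynomial prod_i (b_i X - a_i). *)
Definition vieta (n : nat) (P : 'I_n -> 'I_2 -> k) : 'I_n.+1 -> k :=
  fun j => (\prod_(i < n) (P i 1 *: 'X - (P i 0)%:P))`_j.

Definition is_sympow (n d : nat) (f : 'I_2 -> {mpoly k[2]})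
    (F : 'I_n.+1 -> {mpoly k[n.+1]}) : Prop :=
  @is_endo n.+1 d F /\
  forall P : 'I_n -> 'I_2 -> k, (forall i, nzv (P i)) ->
    peq (evF F (vieta P)) (vieta (fun i => evF f (P i))).

(* Defining linear form of the hyperplane H_P = {Phi : Phi(P) = 0},
   P = (a:b):  Phi(a,b) = sum_j c_j a^j b^(n-j). *)
Definition hypP (n : nat) (P : 'I_2 -> k) : {mpoly k[n.+1]} :=
  \sum_(j < n.+1) (P 0 ^+ j * P 1 ^+ (n - j)) *: 'X_j.

Definition mirred (m : nat) (g : {mpoly k[m]}) : Prop :=
  g != 0 /\ g \isn't a GRing.unit /\
  forall a b : {mpoly k[m]}, g = a * b -> a \is a GRing.unit \/ b \is a GRing.unit.

(* The hypersurface V(G) in P^(m-1) is improper under F: for every irreducible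
   component Z = V(g) (g an irreducible factor of G) there are indices
   i_0 < ... < i_(m-1) with F^(i_0)(Z) /\ ... /\ F^(i_(m-1))(Z) nonempty. *)
Definition improper (m : nat) (F : 'I_m -> {mpoly k[m]}) (G : {mpoly k[m]}) : Prop :=
  forall g : {mpoly k[m]}, mirred g -> (exists h, G = g * h) ->
    exists i : 'I_m -> nat,
      (forall j1 j2 : 'I_m, (j1 < j2)%N -> (i j1 < i j2)%N) /\
      exists w : 'I_m -> k, nzv w /\
        forall j : 'I_m, exists z : 'I_m -> k,
          [/\ nzv z, g.@[z] = 0 & peq w (iterF F (i j) z)].

Definition preperiodic (f : 'I_2 -> {mpoly k[2]}) (P : 'I_2 -> k) : Prop :=
  exists s t : nat, s <> t /\ peq (iterF f s P) (iterF f t P).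

End Defs.

(* Main.v *)
Require Import Defs.
From HB Require Import structures.
From mathcomp Require Import all_boot all_order all_algebra.
From mathcomp Require Import mpoly.
From mathcomp Require Import ring zify.
From Stdlib Require Import Classical.
Import Order.TTheory GRing.Theory.
Local Open Scope ring_scope.
Set Implicit Arguments. Unset Strict Implicit.
Section Helpers.
Variable k : closedFieldType.

Lemma peq_refl m (v : 'I_m -> k) : peq v v.
Proof. by exists 1; rewrite ?oner_neq0 // => i; rewrite mul1r. Qed.

Lemma peq_sym m (v w : 'I_m -> k) : peq v w -> peq w v.
Proof.
case=> c c0 H; exists c^-1; first by rewrite invr_eq0.
by move=> i; rewrite H mulrA mulVf // mul1r.
Qed.

Lemma peq_trans m (u v w : 'I_m -> k) : peq u v -> peq v w -> peq u w.
Proof.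
case=> c c0 H; case=> c' c0' H'; exists (c * c'); first by rewrite mulf_neq0.
by move=> i; rewrite H H' mulrA.
Qed.

Lemma meval_scale m d (p : {mpoly k[m]}) (c : k) (v : 'I_m -> k) :
  p \is d.-homog -> p.@[fun i => c * v i] = c ^+ d * p.@[v].
Proof.
move=> hp; rewrite !mevalE big_distrr /=; apply: eq_big_seq => mo Hm.
rewrite mulrCA; congr (_ * _).
rewrite (eq_bigr (fun i => c ^+ mo i * v i ^+ mo i)); last by move=> i _; rewrite exprMn.
rewrite big_split /= prodrXr -mdegE (dhomog_mf hp Hm) //.
Qed.

Lemma evF_peq m d (F : 'I_m -> {mpoly k[m]}) v w :
  is_endo d F -> peq v w -> peq (evF F v) (evF F w).
Proof.
case=> hh _; case=> c c0 H; exists (c ^+ d); first by rewrite expf_neq0.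
move=> j; rewrite /evF -(meval_scale _ _ (hh j)); apply: meval_eq => i; exact: H.
Qed.

Lemma evF_nzv m d (F : 'I_m -> {mpoly k[m]}) v :
  is_endo d F -> nzv v -> nzv (evF F v).
Proof.
case=> _ hz [i vi]; apply: NNPP => hn; move/eqP: vi; apply.
apply: hz => j; apply: NNPP => hj; apply: hn; exists j; exact/eqP.
Qed.

Lemma iterF_nzv m d (F : 'I_m -> {mpoly k[m]}) i v :
  is_endo d F -> nzv v -> nzv (iterF F i v).
Proof. move=> hF hv; elim: i => //= i IH; exact: evF_nzv hF IH. Qed.

Lemma iterF_peq m d (F : 'I_m -> {mpoly k[m]}) i v w :
  is_endo d F -> peq v w -> peq (iterF F i v) (iterF F i w).
Proof. move=> hF hv; elim: i => //= i IH; exact: evF_peq hF IH. Qed.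

Lemma iterF_add m (F : 'I_m -> {mpoly k[m]}) a b v :
  iterF F (a + b) v = iterF F a (iterF F b v).
Proof. by rewrite /iterF iterD. Qed.

Definition cross (u v : 'I_2 -> k) := u 1 * v 0 - u 0 * v 1.

Lemma ord2P (i : 'I_2) : i = 0 \/ i = 1.
Proof. by case: i => [[|[|]]] // H; [left|right]; apply: val_inj. Qed.

Lemma nzv2 (u : 'I_2 -> k) : nzv u -> u 0 != 0 \/ u 1 != 0.
Proof. by case=> i; case: (ord2P i) => ->; auto. Qed.

Lemma cross_peq u u' v v' : peq u u' -> peq v v' -> cross u v = 0 -> cross u' v' = 0.
Proof.
case=> c c0 H; case=> c' c0' H'; rewrite /cross !H !H' => /eqP.
have -> : c * u' 1 * (c' * v' 0) - c * u' 0 * (c' * v' 1) = (c * c') * (u' 1 * v' 0 - u' 0 * v' 1) by ring.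
by rewrite mulf_eq0 mulf_eq0 (negbTE c0) (negbTE c0') /= => /eqP.
Qed.

Lemma cross_self u : cross u u = 0.
Proof. by rewrite /cross mulrC subrr. Qed.

Lemma cross0_peq u v : nzv u -> nzv v -> cross u v = 0 -> peq u v.
Proof.
move=> hu hv; rewrite /cross => /eqP; rewrite subr_eq0 => /eqP E.
have [v0|v0] := eqVneq (v 0) 0.
  have v1 : v 1 != 0 by case: (nzv2 hv) => //; rewrite v0 eqxx.
  have u0 : u 0 = 0 by move: E; rewrite v0 mulr0 => /esym/eqP; rewrite mulf_eq0 (negbTE v1) orbF => /eqP.
  have u1 : u 1 != 0 by case: (nzv2 hu) => //; rewrite u0 eqxx.
  exists (u 1 / v 1); first by rewrite mulf_neq0 ?invr_eq0.
  move=> i; case: (ord2P i) => ->; first by rewrite u0 v0 mulr0.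
  by rewrite mulrVK ?unitfE.
have u0 : u 0 != 0.
  apply/negP => /eqP u0; move: E; rewrite u0 mul0r => /eqP; rewrite mulf_eq0 (negbTE v0) orbF => u1.
  by case: (nzv2 hu); rewrite ?u0 ?eqxx ?u1.
exists (u 0 / v 0); first by rewrite mulf_neq0 ?invr_eq0.
move=> i; case: (ord2P i) => ->; first by rewrite mulrVK ?unitfE.
by rewrite mulrAC -E mulfK.
Qed.

End Helpers.
Section B.
Variable k : closedFieldType.

Definition lin (u : 'I_2 -> k) : {poly k} := u 1 *: 'X - (u 0)%:P.

Lemma size_lin u : (size (lin u) <= 2)%N.
Proof.
rewrite /lin; apply: leq_trans (size_polyD _ _) _; rewrite size_polyN geq_max.
apply/andP; split; first by apply: leq_trans (size_scale_leq _ _) _; rewrite size_polyX.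
by apply: leq_trans (size_polyC_leq1 _) _.
Qed.

Lemma size_prodlin n (Q : 'I_n -> 'I_2 -> k) : (size (\prod_(i < n) lin (Q i))%R <= n.+1)%N.
Proof.
elim: n Q => [|n IH] Q; first by rewrite big_ord0 size_poly1.
rewrite big_ord_recr /=; apply: leq_trans (size_polyMleq _ _) _.
have h1 := IH (fun i => Q (widen_ord (leqnSn n) i)); have h2 := size_lin (Q ord_max).
rewrite -subn1 leq_subLR. rewrite (leq_trans (leq_add h1 h2)) //. by rewrite addnC.
Qed.

Lemma hyp_eval n (P : 'I_2 -> k) (v : 'I_n.+1 -> k) :
  (hypP n P).@[v] = \sum_(j < n.+1) P 0 ^+ j * P 1 ^+ (n - j) * v j.
Proof.
rewrite /hypP (big_morph (meval v) (mevalD v) (meval0 v)).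
by apply: eq_bigr => j _; rewrite mevalZ mevalXU.
Qed.

Definition hsum n (p : {poly k}) (P : 'I_2 -> k) :=
  \sum_(j < n.+1) P 0 ^+ j * P 1 ^+ (n - j) * p`_j.

Lemma hsum_lin n (p : {poly k}) (P u : 'I_2 -> k) : (size p <= n.+1)%N ->
  hsum n.+1 (p * lin u) P = hsum n p P * cross u P.
Proof.
move=> hs; rewrite /hsum /lin /cross.
have E : forall j, (p * (u 1 *: 'X - (u 0)%:P))`_j =
   u 1 * (if (j == 0)%N then 0 else p`_j.-1) - u 0 * p`_j.
  move=> j; rewrite mulrBr -scalerAr coefB coefZ coefMX; congr (_ - _).
  by rewrite mulrC mul_polyC coefZ.
rewrite (eq_bigr (fun j : 'I_n.+2 => u 1 * (P 0 ^+ j * P 1 ^+ (n.+1 - j) * (if (nat_of_ord j == 0)%N then 0 else p`_j.-1))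
    - u 0 * (P 0 ^+ j * P 1 ^+ (n.+1 - j) * p`_j))); last first.
  by move=> j _; rewrite E; ring.
rewrite sumrB -!mulr_sumr.
have -> : \sum_(j < n.+2) P 0 ^+ j * P 1 ^+ (n.+1 - j) * (if (nat_of_ord j == 0)%N then 0 else p`_j.-1)
   = P 0 * \sum_(j < n.+1) P 0 ^+ j * P 1 ^+ (n - j) * p`_j.
  rewrite big_ord_recl /= mulr0 add0r mulr_sumr; apply: eq_bigr => j _.
  rewrite /bump /= add1n subSS exprS; ring.
have -> : \sum_(j < n.+2) P 0 ^+ j * P 1 ^+ (n.+1 - j) * p`_j
   = P 1 * \sum_(j < n.+1) P 0 ^+ j * P 1 ^+ (n - j) * p`_j.
  rewrite big_ord_recr /= (nth_default 0 hs) mulr0 addr0 mulr_sumr; apply: eq_bigr => j _.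
  rewrite subSn; last by rewrite -ltnS ltn_ord.
  rewrite exprS; ring.
ring.
Qed.

Lemma hsum_prod n (Q : 'I_n -> 'I_2 -> k) P :
  hsum n (\prod_(i < n) lin (Q i)) P = \prod_(i < n) cross (Q i) P.
Proof.
elim: n Q => [|n IH] Q.
  by rewrite /hsum !big_ord0 big_ord1 /= coef1 !expr0 !mul1r.
rewrite !big_ord_recr /= hsum_lin ?IH //; exact: size_prodlin.
Qed.

Lemma hyp_vieta n (Q : 'I_n -> 'I_2 -> k) P :
  (hypP n P).@[vieta Q] = \prod_(i < n) cross (Q i) P.
Proof. by rewrite hyp_eval -hsum_prod. Qed.

Lemma hyp_scale n P (v w : 'I_n.+1 -> k) c : (forall i, v i = c * w i) ->
  (hypP n P).@[v] = c * (hypP n P).@[w].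
Proof.
move=> H; rewrite !hyp_eval mulr_sumr; apply: eq_bigr => j _; rewrite H; ring.
Qed.

End B.
Section C.
Variable k : closedFieldType.

Lemma lin_neq0 (u : 'I_2 -> k) : nzv u -> lin u != 0.
Proof.
move=> hu; apply/negP => /eqP H.
have h0 : (lin u)`_0 = - u 0 by rewrite /lin coefB coefZ coefX coefC /= mulr0 sub0r.
have h1 : (lin u)`_1 = u 1 by rewrite /lin coefB coefZ coefX coefC /= mulr1 subr0.
move: h0 h1; rewrite H !coef0 => /esym/eqP; rewrite oppr_eq0 => /eqP a /esym b.
by case: (nzv2 hu); rewrite ?a ?b eqxx.
Qed.

Lemma vieta_nzv n (Q : 'I_n -> 'I_2 -> k) : (forall i, nzv (Q i)) -> nzv (vieta Q).
Proof.
move=> hQ; set p := \prod_(i < n) lin (Q i).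
have p0 : p != 0 by apply/prodf_neq0 => i _; exact: lin_neq0.
have sp := size_prodlin Q.
have lt : ((size p).-1 < n.+1)%N.
  by rewrite (leq_trans _ sp) // prednK // lt0n size_poly_eq0.
exists (Ordinal lt); rewrite /vieta /=. by rewrite -/p -lead_coefE lead_coef_eq0.
Qed.

Lemma lin_scale (u u' : 'I_2 -> k) c : (forall i, u i = c * u' i) -> lin u = c *: lin u'.
Proof. by move=> H; rewrite /lin !H scalerBr scalerA polyCM mul_polyC. Qed.

Lemma vieta_peq n (Q Q' : 'I_n -> 'I_2 -> k) :
  (forall i, peq (Q i) (Q' i)) -> peq (vieta Q) (vieta Q').
Proof.
move=> H; have [c c0 hc] := fin_all_exists2 H.
exists (\prod_(i < n) c i); first by apply/prodf_neq0 => i _; exact: c0.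
move=> j; rewrite /vieta.
rewrite (eq_bigr (fun i => c i *: lin (Q' i))); last by move=> i _; exact: lin_scale.
by rewrite scaler_prod coefZ.
Qed.

Lemma factor n (w : 'I_n.+1 -> k) : nzv w ->
  exists Q : 'I_n -> 'I_2 -> k, (forall i, nzv (Q i)) /\ peq w (vieta Q).
Proof.
move=> [j0 wj0]; set p := \poly_(j < n.+1) w (inord j).
have cp : forall j : 'I_n.+1, p`_j = w j by move=> j; rewrite coef_poly ltn_ord inord_val.
have p0 : p != 0 by apply/negP => /eqP h; move: wj0; rewrite -cp h coef0 eqxx.
have [r Hr] := closed_field_poly_normal p.
have sr : (size r <= n)%N.
  have := size_poly n.+1 (fun j => w (inord j)); rewrite -/p Hr size_scale ?lead_coef_eq0 // size_prod_XsubC.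
  by [].
pose Q := fun (i : 'I_n) (e : 'I_2) =>
  if (i < size r)%N then (if e == 0 then r`_i else 1) else (if e == 0 then -1 else 0).
have o10 : ((1 : 'I_2) == 0) = false by [].
exists Q; split.
  move=> i; case: (boolP (i < size r)%N) => h.
    by exists 1; rewrite /Q h o10 oner_neq0.
  by exists 0; rewrite /Q (negbTE h) eqxx oppr_eq0 oner_neq0.
have E : \prod_(i < n) lin (Q i) = \prod_(z <- r) ('X - z%:P).
  rewrite (eq_bigr (fun i : 'I_n => if (i < size r)%N then 'X - (r`_i)%:P else 1)); last first.
    move=> i _; rewrite /lin /Q /=; case: ifP => _ /=; first by rewrite scale1r.
    by rewrite scale0r sub0r -polyCN opprK.
  rewrite -(big_mkord xpredT (fun i => if (i < size r)%N then 'X - (r`_i)%:P else 1)).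
  rewrite (big_cat_nat (n:=size r)) //= [X in _ * X]big1_seq ?mulr1; last first.
    move=> i; rewrite mem_iota => /andP[_ /andP [h _]]. by rewrite ltnNge h.
  rewrite [RHS](big_nth 0) big_nat_cond [RHS]big_nat_cond; apply: eq_bigr => i /andP [/andP [_ ->]] //.
exists (lead_coef p); first by rewrite lead_coef_eq0.
move=> j; rewrite /vieta E -cp {1}Hr coefZ //.
Qed.

Lemma iter_vieta n d (f : 'I_2 -> {mpoly k[2]}) F (Q : 'I_n -> 'I_2 -> k) i :
  is_endo d f -> is_sympow d f F -> (forall l, nzv (Q l)) ->
  peq (iterF F i (vieta Q)) (vieta (fun l => iterF f i (Q l))).
Proof.
move=> hf [hF hs] hQ; elim: i => [|i IH]; first exact: peq_refl.
apply: peq_trans (evF_peq hF IH) _.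
by apply: hs => l; apply: iterF_nzv hf (hQ l).
Qed.

End C.
Section D.
Variable k : closedFieldType.

Lemma sum_delta n (c : 'I_n -> k) j0 :
  \sum_(j < n) c j * (j == j0)%:R = c j0.
Proof.
rewrite (bigD1 j0) //= eqxx mulr1 big1 ?addr0 // => j /negbTE ->; by rewrite mulr0.
Qed.

Lemma hyp_neq0 n (P : 'I_2 -> k) : nzv P -> hypP n P != 0.
Proof.
move=> hP; apply/negP => /eqP H.
case: (nzv2 hP) => h.
  have := @hyp_eval _ n P (fun j => (j == ord_max)%:R); rewrite H meval0 sum_delta /= subnn expr0 mulr1.
  by move/esym/eqP; rewrite expf_eq0 (negbTE h) andbF.
have := @hyp_eval _ n P (fun j => (j == ord0)%:R); rewrite H meval0 sum_delta /= subn0 expr0 mul1r.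
by move/esym/eqP; rewrite expf_eq0 (negbTE h) andbF.
Qed.

Lemma msize_hyp n (P : 'I_2 -> k) : nzv P -> msize (hypP n P) = 2%N.
Proof.
move=> hP; apply/eqP; rewrite eqn_leq; apply/andP; split.
  apply: leq_trans (msize_sum _ _ _) _; apply/bigmax_leqP => j _.
  by apply: leq_trans (msizeZ_le _ _) _; rewrite msizeX mdeg1.
rewrite ltnNge; apply/negP => /msize1_polyC H.
have := @hyp_eval _ n P (fun _ => 0); rewrite H mevalC big1 => [h0|]; last by move=> j _; rewrite mulr0.
by move: (hyp_neq0 n hP); rewrite H h0 mpolyC0 eqxx.
Qed.

Lemma msize_unit m (p : {mpoly k[m]}) : p \is a GRing.unit -> msize p = 1%N.
Proof.
case/unitrP => q [h1 h2].
have p0 : p != 0 by apply/negP => /eqP h; move: h1; rewrite h mulr0 => /eqP; rewrite eq_sym oner_eq0.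
have q0 : q != 0 by apply/negP => /eqP h; move: h1; rewrite h mul0r => /eqP; rewrite eq_sym oner_eq0.
have := msizeM q0 p0; rewrite h1 msize1.
have a : (0 < msize p)%N by rewrite lt0n msize_poly_eq0.
have b : (0 < msize q)%N by rewrite lt0n msize_poly_eq0.
move=> E; apply/eqP; rewrite eqn_leq a andbT.
by rewrite -(leq_add2l (msize q)) -(prednK (ltn_addr (msize p) b)) -E addn1.
Qed.

Lemma msize1_unit m (p : {mpoly k[m]}) : msize p = 1%N -> p \is a GRing.unit.
Proof.
move/eqP/msize_poly1P => [c c0 ->]; apply/unitrP; exists (c^-1)%:MP.
by rewrite -!mpolyCM mulVf ?mulfV // mpolyC1.
Qed.

Lemma msize_prod_split m (a b : {mpoly k[m]}) :
  msize (a * b) = 2%N -> a != 0 -> b != 0 -> (msize a = 1%N \/ msize b = 1%N).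
Proof.
move=> H a0 b0; rewrite msizeM // in H.
have x : (0 < msize a)%N by rewrite lt0n msize_poly_eq0.
have y : (0 < msize b)%N by rewrite lt0n msize_poly_eq0.
have [ha|ha] := eqVneq (msize a) 1%N; first by left.
right; move/eqP: ha => ha; move: H x y ha; set sa := msize a; set sb := msize b.
move=> H x y ha; lia.
Qed.

Lemma mirred_hyp n (P : 'I_2 -> k) : nzv P -> mirred (hypP n P).
Proof.
move=> hP; split; first exact: hyp_neq0.
split; first by apply/negP => /msize_unit; rewrite msize_hyp.
move=> a b E.
have a0 : a != 0 by apply/negP => /eqP h; move: (hyp_neq0 n hP); rewrite E h mul0r eqxx.
have b0 : b != 0 by apply/negP => /eqP h; move: (hyp_neq0 n hP); rewrite E h mulr0 eqxx.
have := msize_hyp n hP; rewrite E => /msize_prod_split /(_ a0 b0) [] /msize1_unit; auto.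
Qed.

Lemma div_hyp n (P : 'I_2 -> k) (g h : {mpoly k[n.+1]}) : nzv P -> mirred g ->
  hypP n P = g * h -> exists2 c, c != 0 & h = c%:MP.
Proof.
move=> hP [g0 [gu _]] E.
have h0 : h != 0 by apply/negP => /eqP h0; move: (hyp_neq0 n hP); rewrite E h0 mulr0 eqxx.
have := msize_hyp n hP; rewrite E => /msize_prod_split /(_ g0 h0) [] H.
  by move: gu; rewrite msize1_unit.
by apply/msize_poly1P/eqP.
Qed.

End D.
Unset Implicit Arguments.
Theorem mainTheorem11 (k : closedFieldType) (char0 : [pchar k] =i pred0)
  (n d : nat) (hn : (1 <= n)%N) (hd : (2 <= d)%N)
  (f : 'I_2 -> {mpoly k[2]}) (hf : @is_endo k 2 d f)
  (F : 'I_n.+1 -> {mpoly k[n.+1]}) (hF : @is_sympow k n d f F)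
  (P : 'I_2 -> k) (hP : nzv P) :
  improper F (hypP n P) <-> preperiodic f P.
Proof.
have hFe : is_endo d F by case: hF.
split.
- move=> imp.
  have := imp (hypP n P) (mirred_hyp n hP) (ex_intro _ 1 (esym (mulr1 _))).
  case=> i [imono [w [wnz hw]]].
  pose Q := fun j : 'I_n.+1 => iterF f (i j) P.
  have nzQ : forall j, nzv (Q j) by move=> j; exact: iterF_nzv hf hP.
  have hQ : forall j, (hypP n (Q j)).@[w] = 0.
    move=> j; have [z [zn gz pz]] := hw j.
    have [R [hR pzR]] := factor zn.
    have pzR' := pzR; case: pzR' => c c0 hc.
    have : (hypP n P).@[vieta R] = 0.
      by move: gz; rewrite (hyp_scale _ hc) => /eqP; rewrite mulf_eq0 (negbTE c0) => /eqP.
    rewrite hyp_vieta => /eqP /prodf_eq0 [l _ /eqP hl].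
    have pw : peq w (vieta (fun l => iterF f (i j) (R l))).
      apply: peq_trans pz _; apply: peq_trans (iterF_peq _ hFe pzR) _.
      exact: iter_vieta hf hF hR.
    case: pw => c' c0' hc'; rewrite (hyp_scale _ hc') hyp_vieta.
    apply/eqP; rewrite mulf_eq0; apply/orP; right; apply/prodf_eq0; exists l => //.
    apply/eqP; apply: (cross_peq _ _ (cross_self (iterF f (i j) P))); last exact: peq_refl.
    apply: iterF_peq hf _; apply: peq_sym; exact: cross0_peq (hR l) hP hl.
  have [S [hS pwS]] := factor wnz.
  case: pwS => c c0 hc.
  have : forall j, exists l, cross (S l) (Q j) = 0.
    move=> j; have := hQ j; rewrite (hyp_scale _ hc) hyp_vieta => /eqP.
    rewrite mulf_eq0 (negbTE c0) /= => /prodf_eq0 [l _ /eqP hl]; by exists l.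
  case/fin_all_exists => lj hlj.
  have ninj : ~ injective lj.
    by move=> inj; have := @leq_card _ _ lj inj; rewrite !card_ord ltnn.
  have [j1 [j2 [e ne]]] : exists j1 j2, lj j1 = lj j2 /\ j1 <> j2.
    apply: NNPP => H; apply: ninj => j1 j2 e; apply: NNPP => ne; apply: H.
    by exists j1, j2.
  exists (i j1), (i j2); split.
    move=> eij; apply: ne; apply: val_inj => /=.
    case: (ltngtP j1 j2) => // h; first by move: (imono _ _ h); rewrite eij ltnn.
    by move: (imono _ _ h); rewrite eij ltnn.
  apply: (@peq_trans _ _ _ (S (lj j1))).
    by apply: peq_sym; exact: cross0_peq (hS _) (nzQ j1) (hlj j1).
  by rewrite e; exact: cross0_peq (hS _) (nzQ j2) (hlj j2).
- move=> [s0 [t0 [hst hpq]]].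
  have [s [t [lt hp]]] : exists s t, (s < t)%N /\ peq (iterF f s P) (iterF f t P).
    case: (ltngtP s0 t0) => h; first by exists s0, t0.
      by exists t0, s0; split => //; exact: peq_sym.
    by move: hst; rewrite h.
  pose p := (t - s)%N.
  have pp : (0 < p)%N by rewrite subn_gt0.
  have per : forall m, peq (iterF f (s + m * p) P) (iterF f s P).
    elim => [|m IH]; first by rewrite mul0n addn0; exact: peq_refl.
    have -> : (s + m.+1 * p = m * p + t)%N by rewrite /p mulSn; lia.
    rewrite iterF_add; apply: peq_trans _ IH.
    rewrite addnC iterF_add; apply: iterF_peq hf _; exact: peq_sym.
  move=> g gi [h E]; have [c c0 hc] := div_hyp hP gi E.
  exists (fun j : 'I_n.+1 => s + j * p)%N; split.
    by move=> j1 j2 lt12; rewrite ltn_add2l ltn_pmul2r.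
  exists (vieta (fun _ : 'I_n => iterF f s P)); split.
    by apply: vieta_nzv => _; exact: iterF_nzv hf hP.
  move=> j; exists (vieta (fun _ : 'I_n => P)); split.
  + by apply: vieta_nzv.
  + have : (hypP n P).@[vieta (fun _ : 'I_n => P)] = 0.
      rewrite hyp_vieta; apply/eqP/prodf_eq0; exists (Ordinal hn) => //.
      by rewrite cross_self.
    rewrite E mevalM hc mevalC => /eqP; rewrite mulf_eq0 (negbTE c0) orbF.
    by move/eqP.
  + apply: peq_sym; apply: peq_trans (iter_vieta _ hf hF _) _ => //.
    exact: vieta_peq.
Qed.
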